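(* Let $G$ be a real $n\times m$ matrix, $\mathbf v\in\mathbb R^n$ and $f\in\mathbb R^{1\times m}$. Consider the linear program of maximizing $fx$ subject to $Gx\le\mathbf v$. Let $\widehat G\in\mathbb R^{(n+1)\times m}$ be $G$ with the row $-f$ appended, and for $h\in\mathbb R$ let $\widehat{\mathbf v}(h)\in\mathbb R^{n+1}$ be $\mathbf v$ with the entry $-h$ appended. Let $P$ be the nonnegative orthant of $\mathbb R^{n+1}$, and let $e_{n+1}$ be the $(n+1)$-th standard basis vector. Assume $\mathcal R(\widehat G)\cap P=\{0\}$, and assume that the linear program is feasible and attains its maximum value $h_o$. For $h\le h_o$ let $P_c(h)=(\widehat{\mathbf v}(h)+\mathcal R(\widehat G))\cap P$, which is a nonempty polytope. Fix $h\le h_o$ and let $h_m$ be the largest $(n+1)$-th component among the extreme points of $P_c(h)$. (i) Let $g_c$ be an extreme point of $P_c(h)$ with $(g_c)_{n+1}=h_m$, and set $y_o=g_c-h_m e_{n+1}$. Then $y_o$ is an extreme point of $P_c(h_o)$, the equation $\widehat G x=\widehat{\mathbf v}(h_o)-y_o$ has at least one solution, and every solution $x$ of it is an optimal solution of the linear program, that is, $Gx\le\mathbf v$ and $fx=h_o$. (ii) Let $g_1,\dots,g_p$ be the extreme points of $P_c(h_o)$. Then the set of all optimal solutions of the linear program equals $$\{x\in\mathbb R^m:\widehat G x=\widehat{\mathbf v}(h_o)-y \text{ for some } y\in\mathrm{conv}\{g_1,\dots,g_p\}\}.$$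
   Context: $\mathrm{conv}$ denotes convex hull. The paper writes $G,\mathbf v$ for the augmented objects $\widehat G,\widehat{\mathbf v}(h_o)$ in this statement. *)

(* Defs.v *)
From HB Require Import structures.
From mathcomp Require Import all_boot all_order all_algebra.
From mathcomp Require Import classical_sets reals.
Set Implicit Arguments. Unset Strict Implicit. Unset Printing Implicit Defensive.
Import Order.TTheory GRing.Theory Num.Theory.
Local Open Scope ring_scope.
Local Open Scope classical_set_scope.

Section LPDefs.
Variable R : realType.

Definition lev k (u w : 'cV[R]_k) : Prop := forall i, u i 0 <= w i 0.

Definition range_mx k m (A : 'M[R]_(k, m)) : set 'cV[R]_k :=
  [set A *m x | x in [set: 'cV[R]_m]].

Definition orthant k : set 'cV[R]_k := [set y | forall i, 0 <= y i 0].

Definition Ghat n m (G : 'M[R]_(n, m)) (f : 'rV[R]_m) : 'M[R]_(n + 1, m) :=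
  col_mx G (- f).
Definition vhat n (v : 'cV[R]_n) (h : R) : 'cV[R]_(n + 1) :=
  col_mx v ((- h)%:M : 'cV[R]_1).

Definition last_idx n : 'I_(n + 1) := rshift n ord0.
Definition e_last n : 'cV[R]_(n + 1) := col_mx 0 (1%:M : 'cV[R]_1).

Definition Pc n m (G : 'M[R]_(n, m)) (f : 'rV[R]_m) (v : 'cV[R]_n) (h : R)
  : set 'cV[R]_(n + 1) :=
  [set vhat v h + z | z in range_mx (Ghat G f)] `&` @orthant (n + 1)%N.

Definition extreme_point k (A : set 'cV[R]_k) (x : 'cV[R]_k) : Prop :=
  A x /\ forall y z, A y -> A z -> forall t : R, 0 < t < 1 ->
    x = t *: y + (1 - t) *: z -> y = x /\ z = x.

Definition conv k (A : set 'cV[R]_k) : set 'cV[R]_k :=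
  [set y | exists (p : nat) (w : 'I_p -> R) (g : 'I_p -> 'cV[R]_k),
     (forall i, 0 <= w i) /\ \sum_(i < p) w i = 1 /\ (forall i, A (g i)) /\
     y = \sum_(i < p) w i *: g i].

Definition lp_obj m (f : 'rV[R]_m) (x : 'cV[R]_m) : R := (f *m x) 0 0.
Definition lp_feasible n m (G : 'M[R]_(n, m)) (v : 'cV[R]_n) (x : 'cV[R]_m) : Prop :=
  lev (G *m x) v.
Definition lp_max_value n m (G : 'M[R]_(n, m)) (v : 'cV[R]_n) (f : 'rV[R]_m) (ho : R)
  : Prop :=
  (exists x, lp_feasible G v x /\ lp_obj f x = ho) /\
  (forall x, lp_feasible G v x -> lp_obj f x <= ho).
Definition lp_optimal n m (G : 'M[R]_(n, m)) (v : 'cV[R]_n) (f : 'rV[R]_m) (ho : R)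
  (x : 'cV[R]_m) : Prop :=
  lp_feasible G v x /\ lp_obj f x = ho.

End LPDefs.
Arguments orthant {R} k.

(* Main.v *)
Require Import Defs.
From HB Require Import structures.
From mathcomp Require Import all_boot all_order all_algebra.
From mathcomp Require Import classical_sets reals boolp.
From mathcomp Require Import ring lra.
Import Order.TTheory GRing.Theory Num.Theory.
Local Open Scope ring_scope.
Local Open Scope classical_set_scope.

Section Core.
Variable R : realType.

Lemma ex_argmin (I : finType) (P : pred I) (F : I -> R) :
  (exists i, P i) -> exists j, P j /\ forall i, P i -> F j <= F i.
Proof.
case=> i0 Pi0.
case: (@arg_minP _ _ I i0 P F Pi0) => j Pj Hj.
by exists j; split.
Qed.

Lemma conv_comb k (E : set 'cV[R]_k) y1 y2 s :
  conv E y1 -> conv E y2 -> 0 <= s <= 1 -> conv E (s *: y1 + (1 - s) *: y2).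
Proof.
move=> [p1 [w1 [g1 [w1p [w1s [g1E ->]]]]]] [p2 [w2 [g2 [w2p [w2s [g2E ->]]]]]].
move=> /andP[s0 s1].
exists (p1 + p2)%N.
exists (fun i => match split i with inl a => s * w1 a | inr b => (1 - s) * w2 b end).
exists (fun i => match split i with inl a => g1 a | inr b => g2 b end).
have sl : forall a : 'I_p1, split (lshift p2 a) = inl a.
  by move=> a; exact: (unsplitK (inl a)).
have sr : forall b : 'I_p2, split (rshift p1 b) = inr b.
  by move=> b; exact: (unsplitK (inr b)).
split.
  move=> i; case: (split i) => [a|b]; apply: mulr_ge0 => //; lra.
split.
  rewrite big_split_ord /=.
  rewrite (eq_bigr (fun i => s * w1 i)); last by move=> i _; rewrite sl.
  rewrite [X in _ + X](eq_bigr (fun i => (1 - s) * w2 i)); last by move=> i _; rewrite sr.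
  by rewrite -!mulr_sumr w1s w2s; ring.
split.
  by move=> i; case: (split i).
rewrite big_split_ord /=.
rewrite [X in _ = X + _](eq_bigr (fun i => (s * w1 i) *: g1 i)); last by move=> i _; rewrite sl.
rewrite [X in _ = _ + X](eq_bigr (fun i => ((1 - s) * w2 i) *: g2 i)); last by move=> i _; rewrite sr.
by rewrite !scaler_sumr; congr (_ + _); apply: eq_bigr => i _; rewrite scalerA.
Qed.

Variables (k m : nat) (A : 'M[R]_(k, m)) (c : 'cV[R]_k).

Definition Q : set 'cV[R]_k :=
  [set c + z | z in range_mx A] `&` orthant k.

Lemma QP y : Q y <-> (exists x, y = c + A *m x) /\ forall i, 0 <= y i 0.
Proof.
split.
  by move=> [[z [x _ <-] <-] Hy]; split => //; exists x.
by move=> [[x ->] Hy]; split => //; exists (A *m x) => //; exists x.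
Qed.

Lemma ext_crit y : Q y ->
  (forall x : 'cV[R]_m, (forall i, y i 0 = 0 -> (A *m x) i 0 = 0) -> A *m x = 0) ->
  extreme_point Q y.
Proof.
move=> Qy H; split => // a b Qa Qb t /andP[t0 t1] ey.
have [[xy ey'] y0] := (QP y).1 Qy.
have [[xa ea] a0] := (QP a).1 Qa.
have [[xb eb] b0] := (QP b).1 Qb.
have zz : forall i, y i 0 = 0 -> a i 0 = 0 /\ b i 0 = 0.
  move=> i yi; move: (a0 i) (b0 i).
  have := congr1 (fun M : 'cV[R]_k => M i 0) ey; rewrite !mxE yi => e.
  move=> ai bi.
  have h1 : 0 <= t * a i 0 by apply: mulr_ge0 => //; lra.
  have h2 : 0 <= (1 - t) * b i 0 by apply: mulr_ge0 => //; lra.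
  have e1 : t * a i 0 = 0 by lra.
  have e2 : (1 - t) * b i 0 = 0 by lra.
  move: e1 e2 => /eqP; rewrite mulf_eq0 => /orP[/eqP|/eqP ->]; first lra.
  move/eqP; rewrite mulf_eq0 => /orP[/eqP|/eqP ->]; first lra.
  by [].
have da : A *m (xa - xy) = a - y by rewrite mulmxBr ea ey' opprD addrACA subrr add0r.
have db : A *m (xb - xy) = b - y by rewrite mulmxBr eb ey' opprD addrACA subrr add0r.
split; apply/eqP; rewrite -subr_eq0; apply/eqP.
  rewrite -da; apply: H => i yi; rewrite da !mxE yi (zz i yi).1; ring.
rewrite -db; apply: H => i yi; rewrite db !mxE yi (zz i yi).2; ring.
Qed.

Definition supp (y : 'cV[R]_k) := #|[set i : 'I_k | y i 0 != 0]%SET|.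

Lemma negex (Hp : forall x : 'cV[R]_m, orthant k (A *m x) -> A *m x = 0)
  (x : 'cV[R]_m) : A *m x != 0 -> exists j, (A *m x) j 0 < 0.
Proof.
move=> nz; case: (pselect (exists j, (A *m x) j 0 < 0)) => // nn; exfalso.
have e : A *m x = 0.
  by apply: Hp => i; rewrite leNgt; apply/negP => h; apply: nn; exists i.
by move: nz; rewrite e eqxx.
Qed.

Lemma step y (x : 'cV[R]_m) : Q y ->
  (forall i, y i 0 = 0 -> (A *m x) i 0 = 0) ->
  (exists j, (A *m x) j 0 < 0) ->
  exists t : R, 0 < t /\ Q (y + t *: (A *m x)) /\
    (supp (y + t *: (A *m x)) < supp y)%N.
Proof.
set d := A *m x.
move=> Qy sup neg.
have [[xy ey] y0] := (QP y).1 Qy.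
have [j [dj Hj]] := @ex_argmin _ (fun i => d i 0 < 0) (fun i => y i 0 / - d i 0) neg.
have yj : 0 < y j 0.
  rewrite lt_neqAle y0 andbT eq_sym; apply/eqP => yj.
  by move: dj; rewrite (sup j yj) ltxx.
set t := y j 0 / - d j 0.
have t0 : 0 < t by apply: divr_gt0; lra.
have E : forall i, (y + t *: d) i 0 = y i 0 + t * d i 0 by move=> i; rewrite !mxE.
exists t; split => //; split.
  apply/QP; split.
    by exists (xy + t *: x); rewrite ey mulmxDr -scalemxAr addrA.
  move=> i; have -> : (y + t *: d) i 0 = y i 0 + t * d i 0 by rewrite !mxE.
  case: (ltP (d i 0) 0) => di.
    have h := Hj i di; rewrite /= -/t ler_pdivlMr in h; last lra.
    rewrite mulrN in h; lra.
  have := mulr_ge0 (ltW t0) di; have := y0 i; lra.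
have Pr : ([set i : 'I_k | (y + t *: d) i 0 != 0] \proper [set i : 'I_k | y i 0 != 0])%SET; last by rewrite /supp; exact: proper_card Pr.
apply/properP; split.
  apply/fintype.subsetP => i; rewrite !inE => nz; apply/negP => /eqP yi; move: nz.
  by rewrite E yi (sup i yi) mulr0 addr0 eqxx.
exists j; rewrite inE.
  by apply/eqP => h; move: yj; rewrite h ltxx.
apply/negPn/eqP; rewrite E /t; field; by rewrite (lt_eqF dj).
Qed.

Lemma krein (Hp : forall x : 'cV[R]_m, orthant k (A *m x) -> A *m x = 0) y :
  Q y -> conv (extreme_point Q) y.
Proof.
suff H : forall N y, (supp y < N)%N -> Q y -> conv (extreme_point Q) y.
  by apply: (H _ y (ltnSn _)).
elim=> [|N IH] {}y //.
move=> hN Qy.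
case: (pselect (exists x : 'cV[R]_m,
   (forall i, y i 0 = 0 -> (A *m x) i 0 = 0) /\ A *m x != 0)) => [[x [sx nz]]|nex];
  last first.
  exists 1%N, (fun=> 1), (fun=> y); split; first by [].
  split; first by rewrite big_ord1.
  split; last by rewrite big_ord1 scale1r.
  move=> _; apply: ext_crit => // x sx.
  by apply/eqP/negPn/negP => nz; apply: nex; exists x.
have [t1 [t10 [Q1 c1]]] := step y x Qy sx (negex Hp x nz).
have sx' : forall i, y i 0 = 0 -> (A *m (- x)) i 0 = 0.
  by move=> i yi; rewrite mulmxN mxE sx // oppr0.
have nz' : A *m (- x) != 0 by rewrite mulmxN oppr_eq0.
have [t2 [t20 [Q2 c2]]] := step y (- x) Qy sx' (negex Hp (- x) nz').
have -> : y = (t2 / (t1 + t2)) *: (y + t1 *: (A *m x)) +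
              (1 - t2 / (t1 + t2)) *: (y + t2 *: (A *m (- x))).
  rewrite mulmxN; apply/matrixP => i j; rewrite !mxE; field; lra.
apply: conv_comb.
- by apply: IH => //; apply: leq_trans c1 _.
- by apply: IH => //; apply: leq_trans c2 _.
apply/andP; split; first by apply: divr_ge0; lra.
by rewrite ler_pdivrMr; lra.
Qed.

End Core.
Section Ent.
Variable R : realType.
Lemma eD k (u w : 'cV[R]_k) i : (u + w) i 0 = u i 0 + w i 0. Proof. by rewrite mxE. Qed.
Lemma eN k (u : 'cV[R]_k) i : (- u) i 0 = - u i 0. Proof. by rewrite mxE. Qed.
Lemma eB k (u w : 'cV[R]_k) i : (u - w) i 0 = u i 0 - w i 0. Proof. by rewrite !mxE. Qed.
Lemma eZ k a (u : 'cV[R]_k) i : (a *: u) i 0 = a * u i 0. Proof. by rewrite mxE. Qed.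

Variables (n m : nat) (G : 'M[R]_(n, m)) (f : 'rV[R]_m) (v : 'cV[R]_n).

Lemma vhat_lo h i : vhat v h (lshift 1 i) 0 = v i 0.
Proof. by rewrite /vhat col_mxEu. Qed.
Lemma vhat_l h : vhat v h (last_idx n) 0 = - h.
Proof. by rewrite /vhat /last_idx col_mxEd mxE /= mulr1n. Qed.
Lemma e_lo i : e_last R n (lshift 1 i) 0 = 0.
Proof. by rewrite /e_last col_mxEu mxE. Qed.
Lemma e_l : e_last R n (last_idx n) 0 = 1.
Proof. by rewrite /e_last /last_idx col_mxEd mxE /= mulr1n. Qed.
Lemma A_lo (x : 'cV[R]_m) i : (Ghat G f *m x) (lshift 1 i) 0 = (G *m x) i 0.
Proof. by rewrite /Ghat mul_col_mx col_mxEu. Qed.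
Lemma A_l (x : 'cV[R]_m) : (Ghat G f *m x) (last_idx n) 0 = - lp_obj f x.
Proof. by rewrite /Ghat mul_col_mx /last_idx col_mxEd mulNmx eN. Qed.

Lemma idx_cases (P : 'I_(n + 1) -> Prop) :
  (forall i : 'I_n, P (lshift 1 i)) -> P (last_idx n) -> forall i, P i.
Proof.
move=> H1 H2 i; rewrite -(splitK i); case: (split i) => [a|b] /=; first exact: H1.
have -> : rshift n b = last_idx n.
  by apply: val_inj => /=; case: b => [[|b'] Hb] //=.
exact: H2.
Qed.

Lemma col_ext (u w : 'cV[R]_(n + 1)) :
  (forall i : 'I_n, u (lshift 1 i) 0 = w (lshift 1 i) 0) ->
  u (last_idx n) 0 = w (last_idx n) 0 -> u = w.
Proof.
move=> H1 H2; apply/matrixP => i j; rewrite (ord1 j).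
by apply: (@idx_cases (fun i => u i 0 = w i 0)).
Qed.
End Ent.

Set Implicit Arguments. Unset Strict Implicit.
Section Main.
Variables (R : realType) (n m : nat) (G : 'M[R]_(n, m)) (v : 'cV[R]_n)
  (f : 'rV[R]_m) (ho : R).
Hypothesis Hmax : lp_max_value G v f ho.

Lemma PcE h y : Pc G f v h y <->
  exists x, y = vhat v h - Ghat G f *m x /\ orthant (n + 1) y.
Proof.
split.
  move=> [[z [x _ <-] <-] Hy]; exists (- x); split => //.
  by rewrite mulmxN opprK.
move=> [x [-> Hy]]; split => //; exists (Ghat G f *m (- x)).
  by exists (- x).
by rewrite mulmxN.
Qed.

Lemma orthE h (x : 'cV[R]_m) : orthant (n + 1) (vhat v h - Ghat G f *m x) <->
  lp_feasible G v x /\ h <= lp_obj f x.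
Proof.
split.
  move=> H; split.
    by move=> i; have := H (lshift 1 i); rewrite eB vhat_lo A_lo; lra.
  by have := H (last_idx n); rewrite eB vhat_l A_l; lra.
move=> [Hf Ho]; apply: idx_cases => [i|]; rewrite eB ?vhat_lo ?A_lo ?vhat_l ?A_l.
  by have := Hf i; lra.
lra.
Qed.

Lemma opt_of y (x : 'cV[R]_m) : orthant (n + 1) y ->
  Ghat G f *m x = vhat v ho - y -> lp_optimal G v f ho x.
Proof.
move=> oy ex.
have ey : y = vhat v ho - Ghat G f *m x by rewrite ex opprB addrC subrK.
rewrite ey in oy; have [Hf Ho] := (orthE _ _).1 oy.
split => //; have := Hmax.2 _ Hf; lra.
Qed.

Lemma Pc_last h y : Pc G f v h y -> y (last_idx n) 0 <= ho - h.
Proof.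
move=> /PcE [x [ey oy]]; rewrite ey in oy; have [Hf Ho] := (orthE _ _).1 oy.
have := Hmax.2 _ Hf; rewrite ey eB vhat_l A_l; lra.
Qed.

Lemma Pc_ho_last y : Pc G f v ho y -> y (last_idx n) 0 = 0.
Proof.
move=> /PcE [x [ey oy]]; rewrite ey in oy; have [Hf Ho] := (orthE _ _).1 oy.
have := Hmax.2 _ Hf; rewrite ey eB vhat_l A_l; lra.
Qed.

Lemma shift_up h y : h <= ho -> Pc G f v ho y ->
  Pc G f v h (y + (ho - h) *: e_last R n).
Proof.
move=> hle /PcE [x [ey oy]]; apply/PcE; exists x; split.
  apply: col_ext => [i|]; rewrite ey !(eD, eB, eN, eZ, vhat_lo, vhat_l, A_lo, A_l, e_lo, e_l); lra.
apply: idx_cases => [i|]; rewrite !(eD, eZ, e_lo, e_l).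
  by have := oy (lshift 1 i); lra.
by have := oy (last_idx n); lra.
Qed.

Lemma shift_down h y : Pc G f v h y -> y (last_idx n) 0 = ho - h ->
  Pc G f v ho (y - (ho - h) *: e_last R n).
Proof.
move=> /PcE [x [ey oy]] yl; apply/PcE; exists x; split.
  apply: col_ext => [i|]; rewrite ey !(eD, eB, eN, eZ, vhat_lo, vhat_l, A_lo, A_l, e_lo, e_l); lra.
apply: idx_cases => [i|]; rewrite !(eB, eD, eN, eZ, e_lo, e_l).
  by have := oy (lshift 1 i); lra.
lra.
Qed.

End Main.

Unset Implicit Arguments. Set Strict Implicit.

Theorem mainTheorem5 (R : realType) (n m : nat)
  (G : 'M[R]_(n, m)) (v : 'cV[R]_n) (f : 'rV[R]_m) (ho h : R) :
  range_mx (Ghat G f) `&` orthant (n + 1)%N = [set 0] ->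
  lp_max_value G v f ho ->
  h <= ho ->
  (* (i) *)
  (forall gc : 'cV[R]_(n + 1),
     extreme_point (Pc G f v h) gc ->
     (forall g, extreme_point (Pc G f v h) g -> g (last_idx n) 0 <= gc (last_idx n) 0) ->
     let hm := gc (last_idx n) 0 in
     let yo := gc - hm *: e_last R n in
     extreme_point (Pc G f v ho) yo /\
     (exists x, Ghat G f *m x = vhat v ho - yo) /\
     (forall x, Ghat G f *m x = vhat v ho - yo -> lp_optimal G v f ho x)) /\
  (* (ii) *)
  [set x | lp_optimal G v f ho x] =
  [set x | exists y, conv (extreme_point (Pc G f v ho)) y /\
                     Ghat G f *m x = vhat v ho - y].
Proof.
move=> Hr Hmax hle.
have Hp : forall x : 'cV[R]_m, orthant (n + 1) (Ghat G f *m x) -> Ghat G f *m x = 0.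
  move=> x ox.
  have : (range_mx (Ghat G f) `&` orthant (n + 1)) (Ghat G f *m x).
    by split => //; exists x.
  by rewrite Hr.
have kr : forall h' y, Pc G f v h' y -> conv (extreme_point (Pc G f v h')) y.
  by move=> h' y; exact: (@krein R (n + 1) m (Ghat G f) (vhat v h') Hp y).
have [[x0 [fx0 ox0]] bnd] := Hmax.
set e := e_last R n.
split; last first.
  apply/seteqP; split => x /=.
    move=> [Hf Ho].
    have P0 : Pc G f v ho (vhat v ho - Ghat G f *m x).
      by apply/PcE; exists x; split => //; apply/orthE; split => //; rewrite Ho.
    exists (vhat v ho - Ghat G f *m x); split; first exact: kr.
    by rewrite opprB addrC subrK.
  move=> [y [cy ey]]; apply: (opt_of Hmax _ ey).
  move: cy => [p [w [g [w0 [w1 [gE ->]]]]]] i.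
  rewrite summxE; apply: sumr_ge0 => j _; rewrite eZ; apply: mulr_ge0 => //.
  by have [[_ og] _] := gE j; exact: og.
move=> gc egc gmax hm yo.
have P0 : Pc G f v ho (vhat v ho - Ghat G f *m x0).
  by apply/PcE; exists x0; split => //; apply/orthE; split => //; rewrite ox0.
have [g0 eg0] : exists g0, extreme_point (Pc G f v ho) g0.
  have [p [w [g [w0 [w1 [gE _]]]]]] := kr ho _ P0.
  case: p w g w0 w1 gE => [|p] w g _ w1 gE.
    by move: w1; rewrite big_ord0 => /esym/eqP; rewrite oner_eq0.
  by exists (g ord0).
set c := ho - h.
have l0 := Pc_ho_last Hmax eg0.1.
have g1e : extreme_point (Pc G f v h) (g0 + c *: e).
  split; first exact: shift_up hle eg0.1.
  move=> a b Pa Pb t /andP[t0 t1] E.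
  have la := Pc_last Hmax Pa; have lb := Pc_last Hmax Pb.
  have El := congr1 (fun M : 'cV[R]_(n + 1) => M (last_idx n) 0) E.
  rewrite /= !(eD, eZ) /e e_l l0 in El.
  move: El la lb; rewrite -/c => El la lb.
  have h1 : 0 <= t * (c - a (last_idx n) 0) by apply: mulr_ge0; lra.
  have h2 : 0 <= (1 - t) * (c - b (last_idx n) 0) by apply: mulr_ge0; lra.
  have z1 : t * (c - a (last_idx n) 0) = 0 by lra.
  have z2 : (1 - t) * (c - b (last_idx n) 0) = 0 by lra.
  have al : a (last_idx n) 0 = c.
    move/eqP: z1; rewrite mulf_eq0 => /orP[/eqP|/eqP]; lra.
  have bl : b (last_idx n) 0 = c.
    move/eqP: z2; rewrite mulf_eq0 => /orP[/eqP|/eqP]; lra.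
  have Pa' := shift_down Pa al; have Pb' := shift_down Pb bl.
  have E' : g0 = t *: (a - c *: e) + (1 - t) *: (b - c *: e).
    apply/matrixP => i j; have := congr1 (fun M : 'cV[R]_(n + 1) => M i j) E.
    rewrite !mxE /= => H; lra.
  have tt : 0 < t < 1 by rewrite t0 t1.
  have [ha hb] := eg0.2 _ _ Pa' Pb' t tt E'.
  by split; [rewrite -ha subrK | rewrite -hb subrK].
have hmv : hm = c.
  have := gmax _ g1e; rewrite eD eZ /e e_l l0 -/hm.
  have := Pc_last Hmax egc.1; rewrite -/hm /c; lra.
have Pyo : Pc G f v ho yo.
  by rewrite /yo hmv; apply: shift_down egc.1 _; rewrite -/hm hmv.
split.
  split => // a b Pa Pb t tt E.
  have Pa' := shift_up hle Pa; have Pb' := shift_up hle Pb.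
  have E' : gc = t *: (a + c *: e) + (1 - t) *: (b + c *: e).
    apply/matrixP => i j; have := congr1 (fun M : 'cV[R]_(n + 1) => M i j) E.
    rewrite /yo hmv !mxE /= => H; lra.
  have [ha hb] := egc.2 _ _ Pa' Pb' t tt E'.
  by split; rewrite /yo hmv; [rewrite -ha addrK | rewrite -hb addrK].
split.
  have [x [ex _]] := (PcE _ _ _ _ _).1 Pyo.
  by exists x; rewrite ex opprB addrC subrK.
move=> x ex; case: Pyo => _ oyo; exact: (opt_of Hmax oyo ex).
Qed.
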